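(* Let $\mathcal{L}\subset\mathcal{L}_*$ be lineages with hierarchical generators $\mathcal{H},\mathcal{H}_*$, and assume $\mathcal{H}$ is linearly independent (as a set of functions on $\mathbb{R}^d$). Let $\mathcal{R}=\mathcal{L}_*\setminus\mathcal{L}$. Then for every $\varphi\in\mathcal{R}\cap\mathcal{H}$ there exist $k\ge1$ and $\varphi_*\in(\mathcal{H}_*\setminus\mathcal{H})\cap\mathrm{ch}^k(\varphi)$.
   Context: Fix integers $d\ge1$, $n\ge2$, $m\ge2$; $s=n-1$, $p=m-1$. B-splines $\varphi^\ell_{\vec i}(\vec x)=\prod_kQ(n^\ell x_k-i_k)$ on $\mathbb{R}^d$ for $\ell\ge0$, $\vec i\in\mathbb{Z}^d$, $Q$ the uniform B-spline of order $m$ with knots $0,\dots,m$; $\mathfrak{B}$ the set of all of them; $\mathcal{B}^0=\{\varphi^0_{\vec i}:\vec i\in[-p:0]^d\}$. Children $\mathrm{ch}(\varphi^\ell_{\vec i})=\{\varphi^{\ell+1}_{\vec k}:n\vec i\le\vec k\le n\vec i+sm\}$, extended to sets by union, $\mathrm{ch}^k$ the $k$-fold application. A lineage is a finite $\mathcal{L}\subset\mathfrak{B}$ with $\mathcal{L}\subset\mathcal{B}^0\cup\mathrm{ch}(\mathcal{L})$; its hierarchical generator is $(\mathcal{B}^0\cup\mathrm{ch}(\mathcal{L}))\setminus\mathcal{L}$. *)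

(* Defs.v *)
From Stdlib Require Import Reals ZArith List Lia.
Import ListNotations.
Open Scope R_scope.

(* Uniform B-spline of order j with knots 0,1,...,j (Cox--de Boor recursion):
   Q_1 = indicator of [0,1),
   Q_j(x) = (x Q_{j-1}(x) + (j - x) Q_{j-1}(x-1)) / (j-1). *)
Fixpoint Qspline (j : nat) (x : R) : R :=
  match j with
  | O => 0
  | S O => if Rle_dec 0 x then (if Rlt_dec x 1 then 1 else 0) else 0
  | S ((S k) as j') =>
      (x * Qspline j' x + (INR j - x) * Qspline j' (x - 1)) / INR j'
  end.

(* A B-spline phi^l_i is indexed by its level l and its integer shift
   vector i in Z^d, represented as a list of length d. *)
Definition bspl : Type := (nat * list Z)%type.

Definition bset : Type := bspl -> Prop.

(* Points of R^d are given by their coordinates x_0,...,x_{d-1}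
   (components beyond d-1 are ignored). *)
Definition prodR (d : nat) (f : nat -> R) : R :=
  fold_right Rmult 1 (map f (seq 0 d)).

Definition bfun (d n m : nat) (b : bspl) (x : nat -> R) : R :=
  prodR d (fun k => Qspline m (INR (n ^ fst b) * x k - IZR (nth k (snd b) 0%Z))).

Definition wf (d : nat) (b : bspl) : Prop := length (snd b) = d.

Definition B0 (d m : nat) : bset := fun b =>
  wf d b /\ fst b = O /\
  forall k, (k < d)%nat ->
    (- (Z.of_nat m - 1) <= nth k (snd b) 0 <= 0)%Z.

Definition child (d n m : nat) (a b : bspl) : Prop :=
  wf d a /\ wf d b /\ fst b = S (fst a) /\
  forall c, (c < d)%nat ->
    (Z.of_nat n * nth c (snd a) 0 <= nth c (snd b) 0 <=
       Z.of_nat n * nth c (snd a) 0 + (Z.of_nat n - 1) * Z.of_nat m)%Z.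

Definition chS (d n m : nat) (S : bset) : bset := fun b =>
  exists a, S a /\ child d n m a b.

Fixpoint chk (d n m : nat) (k : nat) (S : bset) : bset :=
  match k with
  | O => S
  | S k' => chS d n m (chk d n m k' S)
  end.

Definition single (a : bspl) : bset := fun b => b = a.

Definition finite_set (S : bset) : Prop :=
  exists l : list bspl, forall b, S b <-> In b l.

Definition lineage (d n m : nat) (L : bset) : Prop :=
  finite_set L /\ forall b, L b -> B0 d m b \/ chS d n m L b.

Definition hgen (d n m : nat) (L : bset) : bset := fun b =>
  (B0 d m b \/ chS d n m L b) /\ ~ L b.

Definition lin_indep (d n m : nat) (H : bset) : Prop :=
  forall (l : list bspl) (c : bspl -> R),
    NoDup l -> (forall b, In b l -> H b) ->
    (forall x : nat -> R,
        fold_right Rplus 0 (map (fun b => c b * bfun d n m b x) l) = 0) ->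
    forall b, In b l -> c b = 0.

(* Main.v *)
Require Import Defs.
From Stdlib Require Import Reals ZArith List Lia Lra Psatz Classical.
Import ListNotations.
Open Scope R_scope.

Definition Tp (k:nat) (y:R) : R := if Rle_dec 0 y then y ^ k else 0.
Fixpoint Dk (k:nat) (g:R->R) (x:R) : R :=
  match k with O => g x | S k' => Dk k' g x - Dk k' g (x-1) end.
Fixpoint DN (h:R) (k:nat) (g:R->R) (x:R) : R :=
  match k with O => g x | S k' => DN h k' g x - DN h k' g (x-h) end.

Lemma Dk_ext k f g x : (forall y, f y = g y) -> Dk k f x = Dk k g x.
Proof. intro H. revert x; induction k; intro x; simpl; rewrite ?IHk; auto. Qed.

Lemma Dk_scal k c g x : Dk k (fun y => c * g y) x = c * Dk k g x.
Proof. revert x; induction k; intro x; simpl; [reflexivity| rewrite !IHk; ring]. Qed.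

Lemma Dk_leib k g x : x * Dk (S k) g x =
  Dk (S k) (fun y => y * g y) x - INR (S k) * Dk k g (x - 1).
Proof.
  revert x; induction k; intro x.
  - simpl. ring.
  - pose proof (IHk x) as I1. pose proof (IHk (x-1)) as I2.
    change (Dk (S (S k)) g x) with (Dk (S k) g x - Dk (S k) g (x-1)).
    change (Dk (S (S k)) (fun y => y * g y) x) with
      (Dk (S k) (fun y => y * g y) x - Dk (S k) (fun y => y * g y) (x-1)).
    assert (HB : Dk (S k) g (x-1) = Dk k g (x-1) - Dk k g (x-1-1)) by reflexivity.
    rewrite (S_INR (S k)). rewrite (S_INR k) in *.
    nra.
Qed.

Lemma T_S k y : y * Tp k y = Tp (S k) y.
Proof. unfold Tp; destruct (Rle_dec 0 y); simpl; ring. Qed.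

Lemma T_hom k c y : 0 < c -> Tp k (c*y) = c^k * Tp k y.
Proof.
  intro Hc; unfold Tp; destruct (Rle_dec 0 (c*y)), (Rle_dec 0 y).
  - apply Rpow_mult_distr.
  - exfalso. nra.
  - exfalso. nra.
  - ring.
Qed.

Lemma Q_SS p x : Qspline (S (S p)) x =
  (x * Qspline (S p) x + (INR (S (S p)) - x) * Qspline (S p) (x - 1)) / INR (S p).
Proof. reflexivity. Qed.

Lemma Q_D p x : Qspline (S p) x = Dk (S p) (Tp p) x / INR (fact p).
Proof.
  revert x; induction p; intro x.
  - simpl. unfold Tp. destruct (Rle_dec 0 x), (Rle_dec 0 (x-1)), (Rlt_dec x 1); simpl; lra.
  - rewrite Q_SS, !IHp.
    rewrite (Dk_ext (S (S p)) (Tp (S p)) (fun y => y * Tp p y)) by (intro; symmetry; apply T_S).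
    change (Dk (S (S p)) (fun y => y * Tp p y) x) with
      (Dk (S p) (fun y => y * Tp p y) x - Dk (S p) (fun y => y * Tp p y) (x-1)).
    pose proof (Dk_leib p (Tp p) x) as I1. pose proof (Dk_leib p (Tp p) (x-1)) as I2.
    assert (HB : Dk (S p) (Tp p) (x-1) = Dk p (Tp p) (x-1) - Dk p (Tp p) (x-1-1)) by reflexivity.
    change (fact (S p)) with (S p * fact p)%nat. rewrite mult_INR.
    assert (H1 := INR_fact_neq_0 p). assert (H2 : INR (S p) <> 0) by (apply not_0_INR; lia).
    rewrite (S_INR (S p)).
    apply (Rmult_eq_reg_r (INR (S p) * INR (fact p))); [|apply Rmult_integral_contrapositive; tauto].
    field_simplify; [|tauto|tauto].
    nra.
Qed.

Definition sumL {X} (f : X -> R) (l : list X) : R := fold_right Rplus 0 (map f l).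
Lemma sumL_app {X} (f : X -> R) l1 l2 : sumL f (l1 ++ l2) = sumL f l1 + sumL f l2.
Proof. induction l1; unfold sumL in *; simpl; [ring| rewrite IHl1; ring]. Qed.
Lemma sumL_ext_in {X} (f g : X -> R) l : (forall x, In x l -> f x = g x) -> sumL f l = sumL g l.
Proof. induction l; intro H; unfold sumL in *; simpl; auto.
  rewrite H by (left; auto). rewrite IHl; auto. intros; apply H; right; auto. Qed.
Lemma sumL_map {X Y} (f : Y -> R) (h : X -> Y) l : sumL f (map h l) = sumL (fun x => f (h x)) l.
Proof. unfold sumL; rewrite map_map; reflexivity. Qed.
Lemma sumL_mul_l {X} (f : X -> R) c l : c * sumL f l = sumL (fun x => c * f x) l.
Proof. induction l; unfold sumL in *; simpl; [ring| rewrite <- IHl; ring]. Qed.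
Lemma sumL_mul_r {X} (f : X -> R) c l : sumL f l * c = sumL (fun x => f x * c) l.
Proof. induction l; unfold sumL in *; simpl; [ring| rewrite <- IHl; ring]. Qed.
Lemma sumL_flat_map {X Y} (f : Y -> R) (g : X -> list Y) l :
  sumL f (flat_map g l) = sumL (fun x => sumL f (g x)) l.
Proof. induction l; simpl; [reflexivity|]. rewrite sumL_app, IHl. reflexivity. Qed.
Lemma sumL_cons {X} (f : X -> R) a l : sumL f (a :: l) = f a + sumL f l.
Proof. reflexivity. Qed.

Definition comb (A : list (R*nat)) (f : R -> R) (y : R) : R :=
  sumL (fun p => fst p * f (y - INR (snd p))) A.

Lemma comb_diff A F y : comb A (fun z => F z - F (z-1)) y = comb A F y - comb A F (y-1).
Proof. unfold comb. induction A as [|[a r] A IH]; unfold sumL in *; simpl; [ring|].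
  rewrite IH. replace (y - INR r - 1) with (y - 1 - INR r) by ring. ring. Qed.

Definition shiftA (t:nat) (A : list (R*nat)) := map (fun p => (fst p, (snd p + t)%nat)) A.
Lemma comb_shift t A f y : comb (shiftA t A) f y = comb A f (y - INR t).
Proof. unfold comb, shiftA. rewrite sumL_map. apply sumL_ext_in. intros [a r] _. simpl.
  rewrite plus_INR. replace (y - (INR r + INR t)) with (y - INR t - INR r) by ring. reflexivity. Qed.
Lemma comb_app A B f y : comb (A ++ B) f y = comb A f y + comb B f y.
Proof. unfold comb; apply sumL_app. Qed.
Lemma comb_ext A f g y : (forall z, f z = g z) -> comb A f y = comb A g y.
Proof. intro H; unfold comb; apply sumL_ext_in; intros; rewrite H; auto. Qed.
Lemma comb_scal A c f y : comb A (fun z => c * f z) y = c * comb A f y.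
Proof. unfold comb; rewrite sumL_mul_l; apply sumL_ext_in; intros; ring. Qed.

Fixpoint sh (N:nat) (A : list (R*nat)) : list (R*nat) :=
  match N with O => [] | S N' => sh N' A ++ shiftA N' A end.

Lemma telescope N A F y : comb (sh N A) (fun z => F z - F (z-1)) y = comb A F y - comb A F (y - INR N).
Proof. induction N; simpl sh.
  - simpl. unfold comb, sumL; simpl. replace (y - 0) with y by ring. ring.
  - rewrite comb_app, IHN, comb_shift, comb_diff, S_INR.
    replace (y - INR N - 1) with (y - (INR N + 1)) by ring. ring. Qed.

Fixpoint Ak (n k : nat) : list (R*nat) :=
  match k with O => [(1, 0%nat)] | S k' => sh n (Ak n k') end.

Lemma DN_comb n k g y : DN (INR n) k g y = comb (Ak n k) (Dk k g) y.
Proof. revert y; induction k; intro y.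
  - unfold comb, sumL; simpl. replace (y - 0) with y by ring. ring.
  - simpl DN. rewrite !IHk. rewrite <- telescope. reflexivity. Qed.

Lemma sh_bound N A B : (forall p, In p A -> (snd p <= B)%nat) ->
  forall p, In p (sh N A) -> (snd p <= B + (N - 1))%nat.
Proof. intro H; induction N; simpl; intros p Hp; [contradiction|].
  apply in_app_or in Hp; destruct Hp as [Hp|Hp]; [apply IHN in Hp; lia|].
  unfold shiftA in Hp; apply in_map_iff in Hp; destruct Hp as [q [<- Hq]]; simpl.
  apply H in Hq; lia. Qed.

Lemma Ak_bound n k : forall p, In p (Ak n k) -> (snd p <= (n-1)*k)%nat.
Proof. induction k; simpl; intros p Hp.
  - destruct Hp as [<-|[]]; simpl; lia.
  - apply (sh_bound n _ _ IHk) in Hp. rewrite Nat.mul_succ_r; lia. Qed.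

Lemma Dk_DN k g h u : Dk k (fun y => g (h * y)) u = DN h k g (h * u).
Proof. revert u; induction k; intro u; simpl; [reflexivity|].
  rewrite !IHk. replace (h * (u-1)) with (h*u - h) by ring. reflexivity. Qed.

Lemma refine1 n p : (1 <= n)%nat -> exists A : list (R*nat),
  (forall q, In q A -> (snd q <= (n-1)*(S p))%nat) /\
  forall u, Qspline (S p) u = comb A (Qspline (S p)) (INR n * u).
Proof.
  intro Hn. assert (Hn0 : 0 < INR n) by (apply lt_0_INR; lia).
  exists (map (fun q => (fst q / INR n ^ p, snd q)) (Ak n (S p))). split.
  - intros q Hq. apply in_map_iff in Hq. destruct Hq as [q0 [<- Hq0]]. simpl. apply Ak_bound; auto.
  - intro u. rewrite Q_D.
    assert (E : Dk (S p) (fun y => Tp p (INR n * y)) u = INR n ^ p * Dk (S p) (Tp p) u).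
    { rewrite <- Dk_scal. apply Dk_ext. intro; apply T_hom; auto. }
    rewrite Dk_DN, DN_comb in E.
    rewrite (comb_ext _ _ (fun z => INR (fact p) * Qspline (S p) z)) in E.
    2:{ intro z. rewrite Q_D. field. apply INR_fact_neq_0. }
    rewrite comb_scal in E.
    assert (Hp : INR n ^ p <> 0) by (apply pow_nonzero; lra).
    assert (Hf := INR_fact_neq_0 p).
    assert (Dk (S p) (Tp p) u = INR (fact p) * comb (Ak n (S p)) (Qspline (S p)) (INR n * u) / INR n ^ p).
    { rewrite E. field. auto. }
    rewrite H. unfold comb. rewrite sumL_map. rewrite sumL_mul_l.
    unfold Rdiv. rewrite sumL_mul_r. rewrite sumL_mul_r. apply sumL_ext_in. intros; simpl. field. split; auto.
Qed.

Definition upd (s : nat -> nat) (k r : nat) : nat -> nat :=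
  fun j => if Nat.eq_dec j k then r else s j.

Fixpoint Tup (A : list (R*nat)) (ks : list nat) : list (R * (nat -> nat)) :=
  match ks with
  | [] => [(1, fun _ => 0%nat)]
  | k :: ks' => flat_map (fun p => map (fun q => (fst p * fst q, upd (snd q) k (snd p))) (Tup A ks')) A
  end.

Lemma prod_expand A (F : nat -> nat -> R) ks : NoDup ks ->
  fold_right Rmult 1 (map (fun k => sumL (fun p => fst p * F k (snd p)) A) ks) =
  sumL (fun q => fst q * fold_right Rmult 1 (map (fun k => F k (snd q k)) ks)) (Tup A ks).
Proof.
  induction ks as [|k ks IH]; intro Hnd.
  - unfold sumL; simpl. ring.
  - apply NoDup_cons_iff in Hnd. destruct Hnd as [Hk Hnd].
    simpl (map _ (k :: ks)). simpl fold_right. rewrite IH by auto.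
    simpl Tup. rewrite sumL_flat_map. rewrite sumL_mul_r. apply sumL_ext_in. intros [a r] _.
    rewrite sumL_map. simpl. rewrite sumL_mul_l. apply sumL_ext_in. intros [c s] _. simpl.
    unfold upd at 1. destruct (Nat.eq_dec k k); [|congruence].
    rewrite (map_ext_in (fun k0 => F k0 (upd s k r k0)) (fun k0 => F k0 (s k0))).
    + ring.
    + intros j Hj. unfold upd. destruct (Nat.eq_dec j k); [subst; contradiction|reflexivity].
Qed.

Lemma Tup_bound A ks B : (forall p, In p A -> (snd p <= B)%nat) ->
  forall q, In q (Tup A ks) -> forall j, (snd q j <= B)%nat.
Proof.
  intro H; induction ks as [|k ks IH]; simpl; intros q Hq j.
  - destruct Hq as [<-|[]]; simpl; lia.
  - apply in_flat_map in Hq. destruct Hq as [p [Hp Hq]]. apply in_map_iff in Hq.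
    destruct Hq as [q0 [<- Hq0]]. simpl. unfold upd. destruct (Nat.eq_dec j k); auto.
Qed.

Lemma nth_map_seq (f : nat -> Z) c d : (c < d)%nat -> nth c (map f (seq 0 d)) 0%Z = f c.
Proof. intro H. rewrite (nth_indep _ _ (f 0%nat)) by (rewrite length_map, length_seq; lia).
  rewrite map_nth, seq_nth by lia. reflexivity. Qed.

Lemma refine_d d n p b : (1 <= n)%nat -> wf d b -> exists P : list (R * bspl),
  (forall q, In q P -> child d n (S p) b (snd q)) /\
  forall x, bfun d n (S p) b x = sumL (fun q => fst q * bfun d n (S p) (snd q) x) P.
Proof.
  intros Hn Hwf. destruct (refine1 n p Hn) as [A [HA HQ]]. destruct b as [l v].
  set (cv := fun (s : nat -> nat) => map (fun k => (Z.of_nat n * nth k v 0 + Z.of_nat (s k))%Z) (seq 0 d)).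
  exists (map (fun q => (fst q, (S l, cv (snd q)))) (Tup A (seq 0 d))). split.
  - intros q Hq. apply in_map_iff in Hq. destruct Hq as [q0 [<- Hq0]]. simpl.
    unfold child; simpl. split; [exact Hwf|]. split; [unfold wf, cv; simpl; rewrite length_map, length_seq; auto|].
    split; [reflexivity|]. intros c Hc. unfold cv. rewrite nth_map_seq by auto.
    pose proof (Tup_bound A (seq 0 d) _ HA q0 Hq0 c) as Hb.
    apply inj_le in Hb. rewrite Nat2Z.inj_mul, Nat2Z.inj_sub in Hb by lia. simpl (Z.of_nat 1) in Hb.
    nia.
  - intro x. unfold bfun, prodR. simpl fst. simpl snd.
    rewrite (map_ext (fun k => Qspline (S p) (INR (n ^ l) * x k - IZR (nth k v 0%Z)))
      (fun k => sumL (fun q => fst q * (fun k r => Qspline (S p) (INR n * (INR (n ^ l) * x k - IZR (nth k v 0%Z)) - INR r)) k (snd q)) A)).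
    2:{ intro k. rewrite HQ. reflexivity. }
    rewrite (prod_expand A (fun k r => Qspline (S p) (INR n * (INR (n ^ l) * x k - IZR (nth k v 0%Z)) - INR r))) by apply seq_NoDup.
    rewrite sumL_map. apply sumL_ext_in. intros [c s] _. cbn [fst snd]. f_equal. f_equal.
    apply map_ext_in. intros k Hk. apply in_seq in Hk. unfold cv. rewrite nth_map_seq by lia.
    apply f_equal. rewrite plus_IZR, mult_IZR, <- !INR_IZR_INZ.
    change (n ^ S l)%nat with (n * n ^ l)%nat. rewrite mult_INR. ring.
Qed.

Definition bspl_eq_dec (a b : bspl) : {a = b} + {a <> b}.
Proof. destruct a as [l1 v1], b as [l2 v2].
  destruct (Nat.eq_dec l1 l2); [|right; congruence].
  destruct (list_eq_dec Z.eq_dec v1 v2); [left; congruence|right; congruence]. Defined.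

Lemma level_desc d n m k phi c : chk d n m k (single phi) c -> fst c = (fst phi + k)%nat.
Proof. revert c; induction k; simpl; intros c H.
  - unfold single in H; subst; lia.
  - destruct H as [a [Ha [_ [_ [Hl _]]]]]. apply IHk in Ha. lia. Qed.

Definition Rep d n m (S : bset) (b : bspl) : Prop :=
  exists P : list (R*bspl), (forall q, In q P -> S (snd q)) /\
    forall x, bfun d n m b x = sumL (fun q => fst q * bfun d n m (snd q) x) P.

Lemma combine_reps d n m S P0 : (forall q, In q P0 -> Rep d n m S (snd q)) ->
  exists P, (forall q, In q P -> S (snd q)) /\ forall x,
    sumL (fun q => fst q * bfun d n m (snd q) x) P0 = sumL (fun q => fst q * bfun d n m (snd q) x) P.
Proof.
  induction P0 as [|[a c] P0 IH]; intro H.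
  - exists []. split; [intros _ []|reflexivity].
  - destruct (H (a,c) (or_introl eq_refl)) as [Pc [HPc HEc]].
    destruct IH as [P' [HP' HE']]; [intros; apply H; right; auto|].
    exists (map (fun q => (a * fst q, snd q)) Pc ++ P'). split.
    + intros q Hq. apply in_app_or in Hq. destruct Hq as [Hq|Hq]; auto.
      apply in_map_iff in Hq. destruct Hq as [q0 [<- Hq0]]. simpl. auto.
    + intro x. rewrite sumL_cons, sumL_app, sumL_map, <- HE'. cbn [fst snd].
      rewrite HEc, sumL_mul_l. f_equal. apply sumL_ext_in. intros; cbn [fst snd]. ring.
Qed.

Lemma claim d n m (Ls : bset) (phi : bspl) (S : bset)
  (Href : forall b, wf d b -> exists P : list (R * bspl),
     (forall q, In q P -> child d n m b (snd q)) /\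
     forall x, bfun d n m b x = sumL (fun q => fst q * bfun d n m (snd q) x) P)
  (M : nat) (HM : forall b, Ls b -> (fst b <= M)%nat) (Hwf : forall b, Ls b -> wf d b)
  (Hfront : forall k b c, chk d n m k (single phi) b -> Ls b -> child d n m b c -> ~ Ls c -> S c) :
  forall j b k, Ls b -> (M - fst b <= j)%nat -> chk d n m k (single phi) b -> Rep d n m S b.
Proof.
  induction j; intros b k Hb Hj Hk;
    destruct (Href b (Hwf b Hb)) as [P0 [HP0 HE]];
    (destruct (combine_reps d n m S P0) as [P [HP HPE]];
     [| exists P; split; [auto| intro x; rewrite HE, HPE; reflexivity]]);
    intros q Hq; destruct (classic (Ls (snd q))) as [HL|HL].
  - exfalso. pose proof (HM _ HL). pose proof (HP0 q Hq) as [_ [_ [Hl _]]]. lia.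
  - exists [(1, snd q)]. split.
    + intros q' [<-|[]]. simpl. eapply Hfront; eauto.
    + intro x. unfold sumL; simpl. ring.
  - pose proof (HM _ HL). pose proof (HP0 q Hq) as Hc. pose proof Hc as [_ [_ [Hl _]]].
    apply (IHj (snd q) (Datatypes.S k)); auto; [lia|]. simpl. exists b. auto.
  - exists [(1, snd q)]. split.
    + intros q' [<-|[]]. simpl. eapply Hfront; eauto.
    + intro x. unfold sumL; simpl. ring.
Qed.

Lemma sumL_upd_in (F : bspl -> R) (c : bspl -> R) a b0 l : NoDup l -> In b0 l ->
  sumL (fun b => (if bspl_eq_dec b b0 then c b + a else c b) * F b) l =
  sumL (fun b => c b * F b) l + a * F b0.
Proof.
  induction l as [|x l IH]; intros Hnd Hin; [destruct Hin|].
  apply NoDup_cons_iff in Hnd; destruct Hnd as [Hx Hnd].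
  rewrite !sumL_cons. destruct (bspl_eq_dec x b0).
  - subst. rewrite (sumL_ext_in _ (fun b => c b * F b)); [ring|].
    intros y Hy. destruct (bspl_eq_dec y b0); [subst; contradiction|reflexivity].
  - destruct Hin as [Hin|Hin]; [congruence|]. rewrite IH by auto. ring.
Qed.

Lemma compress (P : list (R * bspl)) : exists l (c : bspl -> R), NoDup l /\
  (forall b, In b l -> In b (map snd P)) /\
  forall F : bspl -> R, sumL (fun b => c b * F b) l = sumL (fun q => fst q * F (snd q)) P.
Proof.
  induction P as [|[a b0] P IH].
  - exists [], (fun _ => 0). split; [constructor|]. split; [intros _ []|reflexivity].
  - destruct IH as [l [c [Hnd [Hin HF]]]].
    destruct (in_dec bspl_eq_dec b0 l) as [Hb|Hb].
    + exists l, (fun b => if bspl_eq_dec b b0 then c b + a else c b). split; auto. split.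
      * intros b Hb'. right. auto.
      * intro F. rewrite sumL_upd_in by auto. rewrite HF, sumL_cons. cbn [fst snd]. ring.
    + exists (b0 :: l), (fun b => if bspl_eq_dec b b0 then a else c b). split; [constructor; auto|]. split.
      * intros b [<-|Hb']; [left; reflexivity|right; auto].
      * intro F. rewrite !sumL_cons. destruct (bspl_eq_dec b0 b0); [|congruence].
        rewrite <- HF. cbn [fst snd]. f_equal. apply sumL_ext_in. intros y Hy.
        destruct (bspl_eq_dec y b0); [subst; contradiction|reflexivity].
Qed.

Lemma max_bound (l : list bspl) b : In b l -> (fst b <= fold_right Nat.max 0 (map fst l))%nat.
Proof. induction l; simpl; [tauto|]. intros [<-|H]; [lia|apply IHl in H; lia]. Qed.

Close Scope R_scope.

Theorem lemma6p4 (d n m : nat) (hd : (1 <= d)%nat) (hn : (2 <= n)%nat)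
    (hm : (2 <= m)%nat) (L Ls : bset) :
  lineage d n m L -> lineage d n m Ls ->
  (forall b, L b -> Ls b) ->
  lin_indep d n m (hgen d n m L) ->
  forall phi : bspl, Ls phi -> ~ L phi -> hgen d n m L phi ->
  exists k : nat, (1 <= k)%nat /\
    exists phis : bspl,
      (hgen d n m Ls phis /\ ~ hgen d n m L phis) /\
      chk d n m k (single phi) phis.
Proof.
  intros HL [[lsL HfinLs] HLs] Hsub Hind phi Hphi HnL Hphih.
  apply NNPP. intro NG.
  assert (NG' : forall k c, (1 <= k)%nat -> chk d n m k (single phi) c -> hgen d n m Ls c -> hgen d n m L c).
  { intros k c Hk Hc Hg. apply NNPP. intro Hn. apply NG. exists k. split; auto. exists c. auto. }
  destruct m as [|p]; [lia|].
  assert (Hwf : forall b, Ls b -> wf d b).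
  { intros b Hb. destruct (HLs b Hb) as [[Hw _]|[a [_ [_ [Hw _]]]]]; auto. }
  set (M := fold_right Nat.max 0 (map fst lsL)).
  set (S := fun c => hgen d n (Datatypes.S p) L c /\ (fst phi < fst c)%nat).
  assert (HR : Rep d n (Datatypes.S p) S phi).
  { apply (claim d n (Datatypes.S p) Ls phi S) with (M := M) (j := (M - fst phi)%nat) (k := 0%nat); auto.
    - intros b Hb. apply refine_d; auto. lia.
    - intros b Hb. apply max_bound, HfinLs; auto.
    - intros k b c Hk Hb Hc HnLs. split.
      + apply (NG' (Datatypes.S k)); [lia| |].
        * simpl. exists b. auto.
        * split; auto. right. exists b. auto.
      + apply level_desc in Hk. destruct Hc as [_ [_ [Hl _]]]. lia.
    - reflexivity. }
  destruct HR as [P [HP HE]].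
  destruct (compress P) as [l [c [Hnd [Hin HF]]]].
  assert (Hl : forall b, In b l -> S b).
  { intros b Hb. apply Hin, in_map_iff in Hb. destruct Hb as [q [<- Hq]]. auto. }
  assert (Hphil : ~ In phi l).
  { intro H. apply Hl in H. destruct H. lia. }
  set (c' := fun b => if bspl_eq_dec b phi then (-1)%R else c b).
  assert (Hc' : c' phi = 0%R).
  { apply (Hind (phi :: l) c').
    - constructor; auto.
    - intros b [<-|Hb]; auto. apply Hl; auto.
    - intro x. change (fold_right Rplus 0%R (map (fun b => (c' b * bfun d n (Datatypes.S p) b x)%R) (phi :: l)))
        with (sumL (fun b => (c' b * bfun d n (Datatypes.S p) b x)%R) (phi :: l)).
      rewrite sumL_cons. rewrite (sumL_ext_in _ (fun b => (c b * bfun d n (Datatypes.S p) b x)%R)).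
      + rewrite (HF (fun b => bfun d n (Datatypes.S p) b x)), <- HE. unfold c'.
        destruct (bspl_eq_dec phi phi); [|congruence]. ring.
      + intros y Hy. unfold c'. destruct (bspl_eq_dec y phi); [subst; contradiction|reflexivity].
    - left; reflexivity. }
  unfold c' in Hc'. destruct (bspl_eq_dec phi phi); [lra|congruence].
Qed.
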